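(* Let $(X,d)$ be a metric space and let $U\subseteq F_{USCG}(X)$. Then the following statements are equivalent: (i) $U$ is compact in $(F_{USCG}(X),H_{\rm end})$; (ii) $U(\alpha)=\bigcup_{u\in U}[u]_\alpha$ is relatively compact in $X$ for each $\alpha\in(0,1]$, and $U$ is closed in $(F_{USCG}(X),H_{\rm end})$; (iii) $U(\alpha)$ is compact in $X$ for each $\alpha\in(0,1]$, and $U$ is closed in $(F_{USCG}(X),H_{\rm end})$.
   Context: A fuzzy set on $X$ is a function $u:X\to[0,1]$, with $\alpha$-cuts $[u]_\alpha=\{x: u(x)\ge\alpha\}$ for $\alpha\in(0,1]$ and $[u]_0=\overline{\{u>0\}}$. $F_{USC}(X)$ is the set of fuzzy sets with all $\alpha$-cuts ($\alpha\in[0,1]$) non-empty and closed; $F_{USCG}(X)=\{u\in F_{USC}(X): [u]_\alpha\text{ compact for all }\alpha\in(0,1]\}$. $X\times[0,1]$ is metrized by $\overline{d}((x,\alpha),(y,\beta))=d(x,y)+|\alpha-\beta|$; ${\rm end}\,u=\{(x,t)\in X\times[0,1]: u(x)\ge t\}$; $H_{\rm end}(u,v)=H({\rm end}\,u,{\rm end}\,v)$ where $H$ is the Hausdorff distance $H(A,B)=\max\{\sup_{a\in A}\inf_{b\in B}\overline{d}(a,b),\sup_{b\in B}\inf_{a\in A}\overline{d}(a,b)\}$. *)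

(* Defs.v *)
From Stdlib Require Import Reals List Classical.
From Coquelicot Require Import Coquelicot.
Open Scope R_scope.

Record is_metric (X : Type) (d : X -> X -> R) : Prop := {
  metric_nonneg : forall x y, 0 <= d x y;
  metric_eq0 : forall x y, d x y = 0 <-> x = y;
  metric_sym : forall x y, d x y = d y x;
  metric_triangle : forall x y z, d x z <= d x y + d y z
}.

Section DistTopology.
Variables (T : Type) (D : T -> T -> R).

Definition open_in (A : T -> Prop) : Prop :=
  forall x, A x -> exists e, 0 < e /\ forall y, D x y < e -> A y.

Definition closed_in (A : T -> Prop) : Prop :=
  open_in (fun x => ~ A x).

Definition closure_in (A : T -> Prop) : T -> Prop :=
  fun x => forall e, 0 < e -> exists y, A y /\ D x y < e.

Definition compact_in (K : T -> Prop) : Prop :=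
  forall (I : Type) (O : I -> T -> Prop),
    (forall i, open_in (O i)) ->
    (forall x, K x -> exists i, O i x) ->
    exists l : list I, forall x, K x -> exists i, In i l /\ O i x.

Definition rel_compact_in (A : T -> Prop) : Prop :=
  compact_in (closure_in A).
End DistTopology.

Section Fuzzy.
Variables (X : Type) (d : X -> X -> R).

Definition fuzzy_set (u : X -> R) : Prop := forall x, 0 <= u x <= 1.

Definition cut (u : X -> R) (a : R) : X -> Prop :=
  fun x => if Rlt_dec 0 a then a <= u x
           else @closure_in X d (fun y => 0 < u y) x.

Definition F_USC (u : X -> R) : Prop :=
  fuzzy_set u /\
  forall a, 0 <= a <= 1 -> (exists x, cut u a x) /\ @closed_in X d (cut u a).

Definition F_USCG (u : X -> R) : Prop :=
  F_USC u /\ forall a, 0 < a <= 1 -> @compact_in X d (cut u a).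

Definition FUSCG := { u : X -> R | F_USCG u }.

Definition dbar (p q : X * R) : R := d (fst p) (fst q) + Rabs (snd p - snd q).

Definition endo (u : X -> R) : X * R -> Prop :=
  fun p => 0 <= snd p <= 1 /\ u (fst p) >= snd p.

Definition dist_pt_set (a : X * R) (B : X * R -> Prop) : Rbar :=
  Glb_Rbar (fun s => exists b, B b /\ s = dbar a b).

Definition excess (A B : X * R -> Prop) : Rbar :=
  Lub_Rbar (fun r => exists a, A a /\ Finite r = dist_pt_set a B).

Definition Rbar_maximum (x y : Rbar) : Rbar :=
  if Rbar_le_dec x y then y else x.

Definition hausdorff (A B : X * R -> Prop) : Rbar :=
  Rbar_maximum (excess A B) (excess B A).

(* H_end on F_USCG(X); it is always finite (<= 1) since X x {0} is contained
   in every endograph *)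
Definition H_end (u v : FUSCG) : R :=
  real (hausdorff (endo (proj1_sig u)) (endo (proj1_sig v))).

Definition Ucut (U : FUSCG -> Prop) (a : R) : X -> Prop :=
  fun x => exists u, U u /\ cut (proj1_sig u) a x.
End Fuzzy.

(* Main.v *)
Require Import Defs.
From Stdlib Require Import Reals List Classical Lra Lia.
From Stdlib Require Import ClassicalEpsilon ProofIrrelevance FunctionalExtensionality.
From Coquelicot Require Import Coquelicot.
Open Scope R_scope.

Lemma choice_fun {A B : Type} (P : A -> B -> Prop) :
  (forall a, exists b, P a b) -> exists f : A -> B, forall a, P a (f a).
Proof.
  intros H. exists (fun a => proj1_sig (constructive_indefinite_description _ (H a))).
  intros a. exact (proj2_sig (constructive_indefinite_description _ (H a))).
Qed.

Lemma arch (e : R) : 0 < e -> exists N : nat, / INR (S N) < e.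
Proof.
  intros He. destruct (archimed_cor1 e He) as [N [HN HN0]].
  exists N. eapply Rle_lt_trans; [|exact HN].
  apply Rinv_le_contravar. apply lt_0_INR; lia. rewrite S_INR; lra.
Qed.

Lemma inv_pos (n : nat) : 0 < / INR (S n).
Proof. apply Rinv_0_lt_compat. apply lt_0_INR; lia. Qed.

Lemma inv_le (n m : nat) : (n <= m)%nat -> / INR (S m) <= / INR (S n).
Proof.
  intros H. apply Rinv_le_contravar. apply lt_0_INR; lia. apply le_INR; lia.
Qed.

Record pmet (T : Type) (D : T -> T -> R) : Prop := {
  pm_sym : forall x y, D x y = D y x;
  pm_tri : forall x y z, D x z <= D x y + D y z;
  pm_refl : forall x, D x x = 0 }.

Definition cluster {T} (D : T -> T -> R) (s : nat -> T) (y : T) :=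
  forall e, 0 < e -> forall N, exists n, (N <= n)%nat /\ D y (s n) < e.

Definition seqc {T} (D : T -> T -> R) (K : T -> Prop) :=
  forall s, (forall n, K (s n)) -> exists y, K y /\ cluster D s y.

Lemma listmax {T} (l : list (T * nat)) : exists M, forall p, In p l -> (snd p <= M)%nat.
Proof.
  induction l as [|a l [M HM]]. exists 0%nat. intros p [].
  exists (Nat.max (snd a) M). intros p [<-|Hp]. lia. specialize (HM p Hp); lia.
Qed.

Lemma compact_seqc {T} (D : T -> T -> R) (HD : pmet T D) (K : T -> Prop) :
  compact_in T D K -> seqc D K.
Proof.
  intros Hc s Hs. apply NNPP; intro Hno.
  assert (Hy : forall y, K y -> exists e N, 0 < e /\ forall n, (N <= n)%nat -> e <= D y (s n)).
  { intros y Ky. apply NNPP; intro C. apply Hno. exists y; split; auto.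
    intros e He N. apply NNPP; intro C2. apply C. exists e, N. split; auto.
    intros n Hn. apply Rnot_lt_le. intro. apply C2. exists n; auto. }
  set (O := fun (p : T * nat) z => exists e, 0 < e /\
        (forall n, (snd p <= n)%nat -> e <= D (fst p) (s n)) /\ D (fst p) z < e).
  destruct (Hc (T * nat)%type O) as [l Hl].
  - intros p z [e [he [hn hz]]]. exists (e - D (fst p) z). split. lra.
    intros z' Hz'. exists e. split;[|split]; auto.
    pose proof (pm_tri _ _ HD (fst p) z z'). lra.
  - intros x Kx. destruct (Hy x Kx) as [e [N [he hN]]]. exists (x, N).
    exists e. simpl. rewrite (pm_refl _ _ HD). auto.
  - destruct (listmax l) as [M HM].
    destruct (Hl (s M) (Hs M)) as [p [Hin [e [he [hn hz]]]]].
    specialize (hn M (HM p Hin)). lra.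
Qed.

Lemma seqc_compact {T} (D : T -> T -> R) (HD : pmet T D) (K : T -> Prop) :
  seqc D K -> compact_in T D K.
Proof.
  intros Hs I O HO Hcov.
  destruct (classic (exists x0, K x0)) as [[x0 Kx0]|Hemp].
  2:{ exists nil. intros x Kx. exfalso. apply Hemp. eauto. }
  destruct (Hcov x0 Kx0) as [i0 _].
  assert (Leb : exists del, 0 < del /\ forall x, K x -> exists i, forall z, D x z < del -> O i z).
  { apply NNPP; intro C.
    assert (Hn : forall n : nat, exists x, K x /\ forall i, exists z, D x z < / INR (S n) /\ ~ O i z).
    { intros n. apply NNPP; intro C2. apply C. exists (/ INR (S n)). split. apply inv_pos.
      intros x Kx. apply NNPP; intro C3. apply C2. exists x. split; auto.
      intros i. apply NNPP; intro C4. apply C3. exists i. intros z Hz.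
      apply NNPP; intro C5. apply C4. eauto. }
    destruct (choice_fun _ Hn) as [s Hsn].
    destruct (Hs s (fun n => proj1 (Hsn n))) as [y [Ky Hy]].
    destruct (Hcov y Ky) as [i Hi]. destruct (HO i y Hi) as [e [he Hb]].
    destruct (arch (e/2)) as [N HN]. lra.
    destruct (Hy (e/2) ltac:(lra) N) as [n [Hn1 Hn2]].
    destruct (proj2 (Hsn n) i) as [z [Hz1 Hz2]]. apply Hz2. apply Hb.
    pose proof (inv_le _ _ Hn1). pose proof (pm_tri _ _ HD y (s n) z). lra. }
  destruct Leb as [del [Hdel Hleb]].
  assert (TB : exists l, (forall c, In c l -> K c) /\ forall x, K x -> exists c, In c l /\ D c x < del).
  { apply NNPP; intro C.
    assert (Hg : forall l : list T, exists x, (forall c, In c l -> K c) -> K x /\ forall c, In c l -> del <= D c x).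
    { intros l. destruct (classic (forall c, In c l -> K c)) as [Hl|Hl].
      - apply NNPP; intro C2. apply C. exists l. split; auto. intros x Kx.
        apply NNPP; intro C3. apply C2. exists x. intros _. split; auto.
        intros c Hc. apply Rnot_lt_le. intro. apply C3. eauto.
      - exists x0. intro. contradiction. }
    destruct (choice_fun _ Hg) as [g Hgp].
    set (pre := fix pre (n : nat) : list T := match n with O => nil | S n' => g (pre n') :: pre n' end).
    assert (HK : forall n, forall c, In c (pre n) -> K c).
    { induction n; simpl. intros c []. intros c [<-|Hc]. apply (Hgp _ IHn). auto. }
    assert (Hin : forall m n, (m < n)%nat -> In (g (pre m)) (pre n)).
    { intros m n Hmn. induction Hmn. simpl; auto. simpl; auto. }
    destruct (Hs (fun n => g (pre n))) as [y [Ky Hy]].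
    { intros n. apply (Hgp _ (HK n)). }
    destruct (Hy (del/2) ltac:(lra) 0%nat) as [m [_ Hm]].
    destruct (Hy (del/2) ltac:(lra) (S m)) as [n [Hn1 Hn2]].
    pose proof (proj2 (Hgp _ (HK n)) _ (Hin m n Hn1)).
    pose proof (pm_tri _ _ HD (g (pre m)) y (g (pre n))).
    rewrite (pm_sym _ _ HD (g (pre m)) y) in H0. lra. }
  destruct TB as [l [HlK Hl]].
  assert (Hf : forall c, exists i, K c -> forall z, D c z < del -> O i z).
  { intros c. destruct (classic (K c)) as [Kc|Kc].
    - destruct (Hleb c Kc) as [i Hi]. eauto.
    - exists i0. intro; contradiction. }
  destruct (choice_fun _ Hf) as [f Hfp].
  exists (map f l). intros x Kx. destruct (Hl x Kx) as [c [Hc Hcx]].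
  exists (f c). split. apply in_map; auto. apply (Hfp c (HlK c Hc)); auto.
Qed.

Lemma closed_closure {T} (D : T -> T -> R) (A : T -> Prop) x :
  closed_in T D A -> closure_in T D A x -> A x.
Proof.
  intros Hc Hx. apply NNPP; intro Nx. destruct (Hc x Nx) as [e [he Hb]].
  destruct (Hx e he) as [y [Ay Hy]]. exact (Hb y Hy Ay).
Qed.

Lemma closed_of {T} (D : T -> T -> R) (A : T -> Prop) :
  (forall x, closure_in T D A x -> A x) -> closed_in T D A.
Proof.
  intros H x Nx. apply NNPP; intro C. apply Nx. apply H. intros e he.
  apply NNPP; intro C2. apply C. exists e. split; auto. intros y Hy Ay. apply C2. eauto.
Qed.

Lemma closure_closed {T} (D : T -> T -> R) (HD : pmet T D) (A : T -> Prop) :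
  closed_in T D (closure_in T D A).
Proof.
  apply closed_of. intros x Hx e he. destruct (Hx (e/2) ltac:(lra)) as [y [Hy Hxy]].
  destruct (Hy (e/2) ltac:(lra)) as [z [Az Hyz]]. exists z. split; auto.
  pose proof (pm_tri _ _ HD x y z). lra.
Qed.

Lemma cluster_closure {T} (D : T -> T -> R) (A : T -> Prop) s y :
  (forall n, A (s n)) -> cluster D s y -> closure_in T D A y.
Proof.
  intros Hs Hy e he. destruct (Hy e he 0%nat) as [n [_ Hn]]. eauto.
Qed.

Lemma closed_sub_compact {T} (D : T -> T -> R) (HD : pmet T D) (A K : T -> Prop) :
  closed_in T D A -> (forall x, A x -> K x) -> compact_in T D K -> compact_in T D A.
Proof.
  intros HA HAK HK. apply seqc_compact; auto. intros s Hs.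
  destruct (compact_seqc D HD K HK s (fun n => HAK _ (Hs n))) as [y [Ky Hy]].
  exists y. split; auto. apply (closed_closure D A y HA). eapply cluster_closure; eauto.
Qed.

Lemma compact_closed {T} (D : T -> T -> R) (HD : pmet T D)
  (Hsep : forall x y, (forall e, 0 < e -> D x y < e) -> x = y) (K : T -> Prop) :
  compact_in T D K -> closed_in T D K.
Proof.
  intros HK. apply closed_of. intros x Hx.
  assert (Hn : forall n, exists y, K y /\ D x y < / INR (S n)).
  { intros n. apply Hx, inv_pos. }
  destruct (choice_fun _ Hn) as [s Hs].
  destruct (compact_seqc D HD K HK s (fun n => proj1 (Hs n))) as [y [Ky Hy]].
  replace x with y; auto. apply Hsep. intros e he.
  destruct (arch (e/2)) as [N HN]. lra.
  destruct (Hy (e/2) ltac:(lra) N) as [n [Hn1 Hn2]].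
  pose proof (proj2 (Hs n)). pose proof (inv_le _ _ Hn1).
  pose proof (pm_tri _ _ HD y (s n) x). rewrite (pm_sym _ _ HD (s n) x) in H1. lra.
Qed.

Lemma extract {T} (D : T -> T -> R) s y :
  cluster D s y -> exists phi : nat -> nat, forall k, (k <= phi k)%nat /\ D y (s (phi k)) < / INR (S k).
Proof.
  intros H. apply (choice_fun (fun k n => (k <= n)%nat /\ D y (s n) < / INR (S k))). intros k. destruct (H _ (inv_pos k) k) as [n Hn]. eauto.
Qed.

Arguments cut {X} d u a _.
Arguments endo {X} u _.
Arguments dbar {X} d p q.
Arguments H_end {X} d u v.
Arguments Ucut {X} d U a _.
Arguments dist_pt_set {X} d a B.
Arguments excess {X} d A B.
Arguments hausdorff {X} d A B.

Lemma compact_ext {T} (D : T -> T -> R) (A B : T -> Prop) :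
  (forall x, A x <-> B x) -> compact_in T D A -> compact_in T D B.
Proof.
  intros H HA I O HO Hc. destruct (HA I O HO) as [l Hl].
  intros x Ax. apply Hc, H, Ax. exists l. intros x Bx. apply Hl, H, Bx.
Qed.

Lemma closed_ext {T} (D : T -> T -> R) (A B : T -> Prop) :
  (forall x, A x <-> B x) -> closed_in T D A -> closed_in T D B.
Proof.
  intros H HA x Bx. destruct (HA x (fun a => Bx (proj1 (H x) a))) as [e [he Hb]].
  exists e. split; auto. intros y Hy By. apply (Hb y Hy). apply H, By.
Qed.

Lemma d_pmet X (d : X -> X -> R) (Hd : is_metric X d) : pmet X d.
Proof.
  destruct Hd as [h1 h2 h3 h4]. split; auto. intros x. apply h2. reflexivity.
Qed.

Lemma dbar_nonneg X (d : X -> X -> R) (Hd : is_metric X d) p q : 0 <= dbar d p q.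
Proof. unfold dbar. pose proof (metric_nonneg _ _ Hd (fst p) (fst q)). pose proof (Rabs_pos (snd p - snd q)). lra. Qed.

Lemma dbar_sym X (d : X -> X -> R) (Hd : is_metric X d) p q : dbar d p q = dbar d q p.
Proof. unfold dbar. rewrite (metric_sym _ _ Hd), Rabs_minus_sym. reflexivity. Qed.

Lemma dbar_tri X (d : X -> X -> R) (Hd : is_metric X d) p q r : dbar d p r <= dbar d p q + dbar d q r.
Proof.
  unfold dbar. pose proof (metric_triangle _ _ Hd (fst p) (fst q) (fst r)).
  pose proof (Rabs_triang (snd p - snd q) (snd q - snd r)).
  replace (snd p - snd q + (snd q - snd r)) with (snd p - snd r) in H0 by ring. lra.
Qed.

Lemma dbar_same X (d : X -> X -> R) (Hd : is_metric X d) x s t : dbar d (x, s) (x, t) = Rabs (s - t).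
Proof. unfold dbar. simpl. rewrite (pm_refl _ _ (d_pmet _ _ Hd)). ring. Qed.

Lemma cut_pos X (d : X -> X -> R) u a x : 0 < a -> (cut d u a x <-> a <= u x).
Proof. intros Ha. unfold cut. destruct (Rlt_dec 0 a); [tauto|lra]. Qed.

Lemma fprop X (d : X -> X -> R) (u : FUSCG X d) :
  (forall x, 0 <= proj1_sig u x <= 1) /\ (exists x, proj1_sig u x = 1) /\
  (forall a, 0 < a <= 1 -> closed_in X d (fun x => a <= proj1_sig u x)) /\
  (forall a, 0 < a <= 1 -> compact_in X d (fun x => a <= proj1_sig u x)).
Proof.
  destruct u as [f [[Hf Hc] Hk]]. simpl. split; [exact Hf|split;[|split]].
  - destruct (Hc 1 ltac:(lra)) as [[x Hx] _]. apply cut_pos in Hx; [|lra].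
    exists x. specialize (Hf x). lra.
  - intros a Ha. apply (closed_ext _ (cut d f a)). intros x. apply cut_pos; lra.
    apply Hc. lra.
  - intros a Ha. apply (compact_ext _ (cut d f a)). intros x. apply cut_pos; lra.
    apply Hk. lra.
Qed.

Lemma endo_closed X (d : X -> X -> R) (Hd : is_metric X d) (w : FUSCG X d) p :
  0 <= snd p <= 1 -> (forall e, 0 < e -> exists q, endo (proj1_sig w) q /\ dbar d p q < e) ->
  endo (proj1_sig w) p.
Proof.
  intros Hp H. split; auto. destruct p as [x t]. simpl in *.
  destruct (fprop X d w) as [Hf [_ [Hc _]]]. apply Rle_ge.
  apply Rnot_lt_le. intro Hlt. pose proof (Hf x).
  set (a := (proj1_sig w x + t) / 2).
  destruct (Hc a ltac:(unfold a; lra) x ltac:(unfold a; lra)) as [e [he Hb]].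
  destruct (H (Rmin e ((t - proj1_sig w x)/2))) as [[y s] [[Hs1 Hs2] Hq]].
  apply Rmin_glb_lt; lra.
  unfold dbar in Hq; simpl in *.
  pose proof (Rmin_l e ((t - proj1_sig w x)/2)). pose proof (Rmin_r e ((t - proj1_sig w x)/2)).
  pose proof (Rabs_pos (t - s)). pose proof (metric_nonneg _ _ Hd x y).
  pose proof (Rle_abs (t - s)).
  apply (Hb y). lra. unfold a. lra.
Qed.

Lemma dist_fin X (d : X -> X -> R) (Hd : is_metric X d) a (B : X * R -> Prop) b0 :
  B b0 -> exists r, dist_pt_set d a B = Finite r /\ (forall b, B b -> r <= dbar d a b) /\
    (forall r', (forall b, B b -> r' <= dbar d a b) -> r' <= r).
Proof.
  intros Hb0. unfold dist_pt_set.
  destruct (Glb_Rbar_correct (fun s => exists b, B b /\ s = dbar d a b)) as [Hlb Hglb].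
  destruct (Glb_Rbar (fun s => exists b, B b /\ s = dbar d a b)) as [r| |] eqn:E.
  - exists r. split; auto. split.
    + intros b Hb. apply (Hlb (dbar d a b)). eauto.
    + intros r' Hr'. apply (Hglb (Finite r')). intros s [b [Hb ->]]. simpl. auto.
  - exfalso. apply (Hlb (dbar d a b0)). eauto.
  - exfalso. apply (Hglb (Finite 0)). intros s [b [Hb ->]]. simpl. apply (dbar_nonneg _ _ Hd).
Qed.

Lemma endo0 X (u : X -> R) x : (forall y, 0 <= u y <= 1) -> endo u (x, 0).
Proof. intros H. split; simpl. lra. specialize (H x). lra. Qed.

Lemma excess_char X (d : X -> X -> R) (Hd : is_metric X d) (u v : FUSCG X d) :
  exists e, excess d (endo (proj1_sig u)) (endo (proj1_sig v)) = Finite e /\ 0 <= e /\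
  (forall r, e < r -> forall p, endo (proj1_sig u) p -> exists q, endo (proj1_sig v) q /\ dbar d p q < r) /\
  (forall r, (forall p, endo (proj1_sig u) p -> forall del, 0 < del -> exists q, endo (proj1_sig v) q /\ dbar d p q < r + del) -> e <= r).
Proof.
  destruct (fprop X d u) as [Hfu [[x0 Hx0] _]].
  destruct (fprop X d v) as [Hfv _].
  set (fu := proj1_sig u) in *. set (fv := proj1_sig v) in *.
  assert (Hd0 : forall p, endo fu p -> exists r, dist_pt_set d p (endo fv) = Finite r /\ 0 <= r <= 1 /\
     (forall b, endo fv b -> r <= dbar d p b) /\ (forall r', (forall b, endo fv b -> r' <= dbar d p b) -> r' <= r)).
  { intros p Hp. destruct (dist_fin X d Hd p (endo fv) (x0, 0) (endo0 X fv x0 Hfv)) as [r [E [H1 H2]]].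
    exists r. split; auto. split; auto. split.
    - apply H2. intros b _. apply (dbar_nonneg _ _ Hd).
    - specialize (H1 (fst p, 0) (endo0 X fv _ Hfv)). destruct p as [x t]. simpl in H1.
      rewrite dbar_same in H1 by auto. destruct Hp as [Hp _]. simpl in Hp.
      rewrite Rminus_0_r, Rabs_right in H1 by lra. lra. }
  unfold excess.
  set (S := fun r => exists a, endo fu a /\ Finite r = dist_pt_set d a (endo fv)).
  destruct (Lub_Rbar_correct S) as [Hub Hl].
  assert (HS : forall a, endo fu a -> forall r ra, dist_pt_set d a (endo fv) = Finite ra -> ra < r -> exists q, endo fv q /\ dbar d a q < r).
  { intros a Ha r ra0 Ea0 Hr. destruct (Hd0 a Ha) as [ra [E [_ [_ H2]]]]. rewrite E in Ea0. injection Ea0 as <-.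
    apply NNPP; intro C. assert (r <= ra). apply H2. intros b Hb. apply Rnot_lt_le. intro. apply C; eauto. lra. }
  assert (Hp0 : endo fu (x0, 1)). { split; simpl; lra. }
  destruct (Hd0 _ Hp0) as [r0 [E0 [Hr0 _]]].
  fold S. destruct (Lub_Rbar S) as [e| |] eqn:E.
  - exists e. split; auto. split.
    + assert (Rbar_le r0 e). apply Hub. exists (x0, 1). auto. simpl in H. lra.
    + split.
      * intros r Hr p Hp. destruct (Hd0 p Hp) as [ra [Ea _]]. apply (HS p Hp r ra Ea).
        assert (Rbar_le ra e). apply Hub. exists p; auto. simpl in H. lra.
      * intros r Hr. apply (Hl (Finite r)). intros s [a [Ha Es]]. simpl.
        destruct (Hd0 a Ha) as [ra [Ea [_ [H1 _]]]]. rewrite Ea in Es. injection Es as ->.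
        apply Rnot_lt_le. intro C. destruct (Hr a Ha (ra - r) ltac:(lra)) as [q [Hq Hq2]].
        specialize (H1 q Hq). lra.
  - exfalso. apply (Hl (Finite 1)). intros s [a [Ha Es]]. simpl.
    destruct (Hd0 a Ha) as [ra [Ea [Hra _]]]. rewrite Ea in Es. injection Es as ->. lra.
  - exfalso. apply (Hub r0). exists (x0, 1). auto.
Qed.

Lemma H_char X (d : X -> X -> R) (Hd : is_metric X d) (u v : FUSCG X d) :
  0 <= H_end d u v /\
  (forall r, H_end d u v < r -> forall p, endo (proj1_sig u) p -> exists q, endo (proj1_sig v) q /\ dbar d p q < r) /\
  (forall r, H_end d u v < r -> forall p, endo (proj1_sig v) p -> exists q, endo (proj1_sig u) q /\ dbar d p q < r) /\
  (forall r, (forall p, endo (proj1_sig u) p -> forall del, 0 < del -> exists q, endo (proj1_sig v) q /\ dbar d p q < r + del) ->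
     (forall p, endo (proj1_sig v) p -> forall del, 0 < del -> exists q, endo (proj1_sig u) q /\ dbar d p q < r + del) ->
     H_end d u v <= r).
Proof.
  destruct (excess_char X d Hd u v) as [e1 [E1 [P1 [Q1 R1]]]].
  destruct (excess_char X d Hd v u) as [e2 [E2 [P2 [Q2 R2]]]].
  assert (HE : H_end d u v = Rmax e1 e2).
  { unfold H_end, hausdorff, Rbar_maximum. rewrite E1, E2.
    destruct (Rbar_le_dec e1 e2) as [h|h]; simpl in *; unfold Rmax;
    destruct (Rle_dec e1 e2); simpl; lra. }
  rewrite HE. pose proof (Rmax_l e1 e2). pose proof (Rmax_r e1 e2).
  split. lra. split. intros r Hr. apply Q1. lra. split. intros r Hr. apply Q2. lra.
  intros r H1 H2. apply Rmax_lub; auto.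
Qed.

Lemma H_pmet X (d : X -> X -> R) (Hd : is_metric X d) : pmet (FUSCG X d) (H_end d).
Proof.
  assert (Hsym : forall u v, H_end d u v <= H_end d v u).
  { intros u v. destruct (H_char X d Hd v u) as [_ [A [B _]]].
    apply (H_char X d Hd u v).
    - intros p Hp del Hdel. apply (B (H_end d v u + del) ltac:(lra) p Hp).
    - intros p Hp del Hdel. apply (A (H_end d v u + del) ltac:(lra) p Hp). }
  split.
  - intros. apply Rle_antisym; auto.
  - intros u v w. destruct (H_char X d Hd u v) as [_ [A1 [B1 _]]].
    destruct (H_char X d Hd v w) as [_ [A2 [B2 _]]].
    apply (H_char X d Hd u w).
    + intros p Hp del Hdel. destruct (A1 (H_end d u v + del/2) ltac:(lra) p Hp) as [q [Hq Hpq]].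
      destruct (A2 (H_end d v w + del/2) ltac:(lra) q Hq) as [q' [Hq' Hqq']].
      exists q'. split; auto. pose proof (dbar_tri _ _ Hd p q q'). lra.
    + intros p Hp del Hdel. destruct (B2 (H_end d v w + del/2) ltac:(lra) p Hp) as [q [Hq Hpq]].
      destruct (B1 (H_end d u v + del/2) ltac:(lra) q Hq) as [q' [Hq' Hqq']].
      exists q'. split; auto. pose proof (dbar_tri _ _ Hd p q q'). lra.
  - intros u. destruct (H_char X d Hd u u) as [H0 [_ [_ H3]]].
    apply Rle_antisym; auto. apply H3; intros p Hp del Hdel; exists p; split; auto;
    unfold dbar; rewrite (pm_refl _ _ (d_pmet _ _ Hd)), Rminus_diag, Rabs_R0; lra.
Qed.

Lemma H_sep X (d : X -> X -> R) (Hd : is_metric X d) (u v : FUSCG X d) :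
  (forall e, 0 < e -> H_end d u v < e) -> u = v.
Proof.
  intros H.
  assert (L : forall u v : FUSCG X d, (forall e, 0 < e -> H_end d u v < e) -> forall x, proj1_sig u x <= proj1_sig v x).
  { clear u v H. intros u v H x. destruct (fprop X d u) as [Hf _].
    assert (endo (proj1_sig v) (x, proj1_sig u x)).
    { apply endo_closed; auto. simpl. apply Hf.
      intros e he. destruct (H_char X d Hd u v) as [_ [A _]]. apply (A e (H e he)).
      split; simpl. apply Hf. lra. }
    destruct H0. simpl in *. lra. }
  assert (Hs : forall e, 0 < e -> H_end d v u < e).
  { intros e he. rewrite (pm_sym _ _ (H_pmet X d Hd)). auto. }
  destruct u as [f pf], v as [g pg].
  assert (f = g). { apply functional_extensionality. intros x.
    apply Rle_antisym. apply (L _ _ H x). apply (L _ _ Hs x). }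
  subst g. f_equal. apply proof_irrelevance.
Qed.

Definition inf (S : nat -> Prop) := forall N, exists n, (N <= n)%nat /\ S n.

Lemma pigeon (tests : list (nat -> Prop)) (S : nat -> Prop) : inf S ->
  exists S', (forall n, S' n -> S n) /\ inf S' /\
    forall P, In P tests -> forall m n, S' m -> S' n -> P m -> P n.
Proof.
  revert S. induction tests as [|P ts IH]; intros S HS.
  - exists S. split; auto. split; auto. intros P [].
  - destruct (IH S HS) as [S1 [H1 [H2 H3]]].
    destruct (classic (inf (fun n => S1 n /\ P n))) as [Hi|Hi].
    + exists (fun n => S1 n /\ P n). split. intros n [h _]; auto. split; auto.
      intros Q [<-|HQ] m n [hm _] [hn hn']; auto. intros. apply (H3 Q HQ m n); auto.
    + exists (fun n => S1 n /\ ~ P n). split. intros n [h _]; auto. split.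
      * intros N. apply NNPP; intro C. apply Hi. intros N'.
        destruct (H2 (Nat.max N N')) as [n [hn hs]]. exists n. split. lia. split; auto.
        apply NNPP; intro nP. apply C. exists n. split. lia. auto.
      * intros Q [<-|HQ] m n [hm hm'] [hn hn']. intros; contradiction.
        intros. apply (H3 Q HQ m n); auto.
Qed.

Lemma levels (eta : R) : 0 < eta -> exists ls : list R,
  forall t, eta <= t <= 1 -> exists l, In l ls /\ eta <= l <= t /\ t < l + eta.
Proof.
  intros He.
  assert (P : forall M, exists ls : list R, forall t, eta <= t < eta * INR (S M) ->
     exists l, In l ls /\ eta <= l <= t /\ t < l + eta).
  { induction M as [|M [ls IH]].
    - exists nil. intros t Ht. simpl in Ht. lra.
    - exists (eta * INR (S M) :: ls). intros t Ht.
      destruct (Rlt_dec t (eta * INR (S M))) as [h|h].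
      + destruct (IH t ltac:(lra)) as [l [A B]]. exists l. simpl; auto.
      + exists (eta * INR (S M)). split. simpl; auto.
        pose proof (pos_INR M). rewrite !S_INR in *. split; [split|]; nra. }
  destruct (arch eta He) as [M HM]. destruct (P M) as [ls H]. exists ls.
  intros t Ht. apply H. split. lra.
  assert (0 < INR (S M)) by (apply lt_0_INR; lia).
  assert (1 < eta * INR (S M)).
  { apply (Rmult_lt_compat_r (INR (S M))) in HM; auto. rewrite Rinv_l in HM; lra. }
  lra.
Qed.

Lemma in_closure {T} (D : T -> T -> R) (HD : pmet T D) (A : T -> Prop) x : A x -> closure_in T D A x.
Proof. intros Ax e he. exists x. split; auto. rewrite (pm_refl _ _ HD). auto. Qed.

Lemma refine X (d : X -> X -> R) (Hd : is_metric X d) (U : FUSCG X d -> Prop)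
  (HK : forall a, 0 < a <= 1 -> compact_in X d (closure_in X d (Ucut d U a)))
  (w : nat -> FUSCG X d) (Hw : forall n, U (w n)) (S : nat -> Prop) (HS : inf S)
  (e : R) (He : 0 < e) :
  exists S', (forall n, S' n -> S n) /\ inf S' /\ forall m n, S' m -> S' n -> H_end d (w m) (w n) < e.
Proof.
  pose proof (d_pmet X d Hd) as HdP.
  set (eta := Rmin e 1 / 4).
  assert (Heta : 0 < eta /\ eta <= 1 /\ 3 * eta < e).
  { unfold eta. pose proof (Rmin_l e 1). pose proof (Rmin_r e 1).
    pose proof (Rmin_pos e 1 He Rlt_0_1). lra. }
  destruct (HK eta ltac:(lra) X (fun y z => d y z < eta)) as [ys Hys].
  { intros y z Hz. exists (eta - d y z). split. lra. intros z' Hz'.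
    pose proof (pm_tri _ _ HdP y z z'). lra. }
  { intros x _. exists x. rewrite (pm_refl _ _ HdP). lra. }
  destruct (levels eta ltac:(lra)) as [ls Hls].
  set (tests := map (fun yl : X * R => fun n => exists x, snd yl <= proj1_sig (w n) x /\ d (fst yl) x < eta)
                    (list_prod ys ls)).
  destruct (pigeon tests S HS) as [S' [H1 [H2 H3]]].
  exists S'. split; auto. split; auto.
  assert (Cl : forall m n, S' m -> S' n -> forall p, endo (proj1_sig (w m)) p ->
                 exists q, endo (proj1_sig (w n)) q /\ dbar d p q < 3 * eta).
  { intros m n Hm Hn [x t] [Ht Hxt]. simpl in Ht, Hxt.
    destruct (fprop X d (w n)) as [Hfn _].
    destruct (Rlt_dec t eta) as [h|h].
    - exists (x, 0). split. apply endo0; auto. rewrite dbar_same; auto.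
      rewrite Rminus_0_r, Rabs_right; lra.
    - destruct (Hls t ltac:(lra)) as [l [Hl1 [Hl2 Hl3]]].
      destruct (Hys x) as [y [Hy1 Hy2]].
      { apply in_closure; auto. exists (w m). split; auto. apply cut_pos. lra. lra. }
      assert (Ht1 : (fun n => exists x, snd (y, l) <= proj1_sig (w n) x /\ d (fst (y, l)) x < eta) m).
      { exists x. simpl. split; auto. lra. }
      apply (H3 _ (in_map _ _ _ (in_prod _ _ _ _ Hy1 Hl1)) m n Hm Hn) in Ht1.
      destruct Ht1 as [x' [Hx'1 Hx'2]]. simpl in *.
      exists (x', l). split. split; simpl. lra. lra.
      unfold dbar. simpl. pose proof (pm_tri _ _ HdP x y x'). rewrite (pm_sym _ _ HdP x y) in H.
      rewrite Rabs_right by lra. lra. }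
  intros m n Hm Hn. destruct (H_char X d Hd (w m) (w n)) as [_ [_ [_ H4]]].
  eapply Rle_lt_trans; [apply (H4 (3 * eta))|lra].
  - intros p Hp del Hdel. destruct (Cl m n Hm Hn p Hp) as [q [Hq1 Hq2]]. exists q. split; auto. lra.
  - intros p Hp del Hdel. destruct (Cl n m Hn Hm p Hp) as [q [Hq1 Hq2]]. exists q. split; auto. lra.
Qed.

Lemma cauchy_sub X (d : X -> X -> R) (Hd : is_metric X d) (U : FUSCG X d -> Prop)
  (HK : forall a, 0 < a <= 1 -> compact_in X d (closure_in X d (Ucut d U a)))
  (w : nat -> FUSCG X d) (Hw : forall n, U (w n)) :
  exists phi : nat -> nat, (forall k, (k <= phi k)%nat) /\
    forall e, 0 < e -> exists N, forall j k, (N <= j)%nat -> (N <= k)%nat -> H_end d (w (phi j)) (w (phi k)) < e.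
Proof.
  assert (Rt : forall p : (nat -> Prop) * nat, exists S', (forall n, S' n -> fst p n /\ (snd p <= n)%nat) /\
     (inf (fst p) -> inf S' /\ forall m n, S' m -> S' n -> H_end d (w m) (w n) < / INR (S (snd p)))).
  { intros [Sx k]. simpl. destruct (classic (inf Sx)) as [HS|HS].
    - destruct (refine X d Hd U HK w Hw (fun n => Sx n /\ (k <= n)%nat)) with (e := / INR (S k))
        as [S' [A [B C]]].
      + intros N. destruct (HS (Nat.max N k)) as [n [h1 h2]]. exists n. split. lia. split; auto. lia.
      + apply inv_pos.
      + exists S'. split; auto.
    - exists (fun n => Sx n /\ (k <= n)%nat). split; auto. intro; contradiction. }
  destruct (choice_fun _ Rt) as [g Hg].
  set (C := nat_rect (fun _ => nat -> Prop) (fun _ => True) (fun k Ck => g (Ck, k))).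
  assert (CS : forall k, C (S k) = g (C k, k)) by reflexivity.
  assert (Cinf : forall k, inf (C k)).
  { induction k. intros N. exists N. split; auto. simpl. exact I.
    rewrite CS. apply (proj2 (Hg (C k, k)) IHk). }
  assert (Cnest : forall i j, (i <= j)%nat -> forall n, C j n -> C i n).
  { intros i j Hij. induction Hij; auto. intros n Hn. rewrite CS in Hn.
    apply IHHij. apply (proj1 (Hg (C m, m)) n Hn). }
  assert (Hphi : forall k, exists n, (k <= n)%nat /\ C (S k) n).
  { intros k. apply Cinf. }
  destruct (choice_fun _ Hphi) as [phi Hp].
  exists phi. split. intros k; apply Hp.
  intros e He. destruct (arch e He) as [N HN]. exists N. intros j k Hj Hk.
  assert (A : C (S N) (phi j)). { apply (Cnest _ (S j)). lia. apply Hp. }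
  assert (B : C (S N) (phi k)). { apply (Cnest _ (S k)). lia. apply Hp. }
  rewrite CS in A, B. eapply Rlt_trans; [|exact HN].
  apply (proj2 (proj2 (Hg (C N, N)) (Cinf N)) _ _ A B).
Qed.

Lemma cauchy_lim X (d : X -> X -> R) (Hd : is_metric X d) (U : FUSCG X d -> Prop)
  (HK : forall a, 0 < a <= 1 -> compact_in X d (closure_in X d (Ucut d U a)))
  (v : nat -> FUSCG X d) (Hv : forall n, U (v n))
  (Hc : forall e, 0 < e -> exists N, forall m n, (N <= m)%nat -> (N <= n)%nat -> H_end d (v m) (v n) < e) :
  exists u : FUSCG X d, forall e, 0 < e -> exists N, forall n, (N <= n)%nat -> H_end d u (v n) < e.
Proof.
  pose proof (d_pmet X d Hd) as HdP.
  set (fv := fun n => proj1_sig (v n)).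
  assert (Hfv : forall n x, 0 <= fv n x <= 1). { intros n. apply (fprop X d (v n)). }
  set (E := fun p : X * R => 0 <= snd p <= 1 /\ forall e, 0 < e -> exists N, forall n, (N <= n)%nat ->
              exists q, endo (fv n) q /\ dbar d p q < e).
  assert (E_intro : forall p, 0 <= snd p <= 1 -> (forall e, 0 < e -> forall N, exists m, (N <= m)%nat /\
              exists q, endo (fv m) q /\ dbar d p q < e) -> E p).
  { intros p Hp H. split; auto. intros e He. destruct (Hc (e/2) ltac:(lra)) as [N0 HN0].
    exists N0. intros n Hn. destruct (H (e/2) ltac:(lra) N0) as [m [Hm [q [Hq Hpq]]]].
    destruct (H_char X d Hd (v m) (v n)) as [_ [A _]].
    destruct (A (e/2) (HN0 m n Hm Hn) q Hq) as [q' [Hq' Hqq']].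
    exists q'. split; auto. pose proof (dbar_tri _ _ Hd p q q'). lra. }
  assert (E_closed : forall p, 0 <= snd p <= 1 -> (forall e, 0 < e -> exists p', E p' /\ dbar d p p' < e) -> E p).
  { intros p Hp H. split; auto. intros e He. destruct (H (e/2) ltac:(lra)) as [p' [[_ Hp'] Hpp']].
    destruct (Hp' (e/2) ltac:(lra)) as [N HN]. exists N. intros n Hn.
    destruct (HN n Hn) as [q [Hq1 Hq2]]. exists q. split; auto. pose proof (dbar_tri _ _ Hd p p' q). lra. }
  assert (E0 : forall x, E (x, 0)).
  { intros x. split. simpl; lra. intros e He. exists 0%nat. intros n _. exists (x, 0).
    split. apply endo0. apply Hfv. rewrite dbar_same; auto. rewrite Rminus_0_r, Rabs_R0. auto. }
  assert (E_down : forall x t s, E (x, t) -> 0 <= s <= t -> E (x, s)).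
  { intros x t s [Ht H] Hs. simpl in Ht. split. simpl; lra. intros e He.
    destruct (H e He) as [N HN]. exists N. intros n Hn. destruct (HN n Hn) as [[y t'] [[Hq1 Hq2] Hq]].
    simpl in *. exists (y, Rmin t' s). split.
    - split; simpl. pose proof (Rmin_r t' s). pose proof (Rmin_glb t' s 0). lra.
      pose proof (Rmin_l t' s). lra.
    - unfold dbar in *. simpl in *. unfold Rmin. destruct (Rle_dec t' s).
      + rewrite (Rabs_right (s - t')) by lra. rewrite (Rabs_right (t - t')) in Hq by lra. lra.
      + rewrite Rminus_diag, Rabs_R0. pose proof (Rabs_pos (t - t')). lra. }
  assert (Hux : forall x, exists ux, E (x, ux) /\ forall t, E (x, t) -> t <= ux).
  { intros x. destruct (Lub_Rbar_correct (fun t => E (x, t))) as [Hub Hl].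
    destruct (Lub_Rbar (fun t => E (x, t))) as [l| |] eqn:EL.
    - exists l. split.
      + assert (0 <= l). { apply (Hub 0 (E0 x)). }
        assert (l <= 1). { apply (Hl (Finite 1)). intros t [Ht _]. simpl in *. lra. }
        apply E_closed. simpl; lra. intros e He. apply NNPP; intro C.
        assert (Rbar_le l (l - e)). { apply Hl. intros t Ht. simpl. apply Rnot_lt_le. intro.
          apply C. exists (x, t). split; auto. rewrite dbar_same; auto.
          assert (t <= l) by apply (Hub t Ht). rewrite Rabs_right; lra. }
        simpl in H1. lra.
      + intros t Ht. apply (Hub t Ht).
    - exfalso. apply (Hl (Finite 1)). intros t [Ht _]. simpl in *. lra.
    - exfalso. apply (Hub 0 (E0 x)). }
  destruct (choice_fun _ Hux) as [u Hu].
  assert (Hu3 : forall x, 0 <= u x <= 1). { intros x. apply (proj1 (Hu x)). }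
  assert (endoE : forall p, endo u p <-> E p).
  { intros [x t]. split.
    - intros [H1 H2]. simpl in *. apply (E_down x (u x)). apply Hu. lra.
    - intros H. split. apply H. simpl. apply Rle_ge. apply Hu. auto. }
  assert (Hx1 : exists x1, E (x1, 1)).
  { assert (Hy : forall n, exists y, fv n y = 1). { intros n. apply (fprop X d (v n)). }
    destruct (choice_fun _ Hy) as [ys Hys].
    destruct (compact_seqc _ HdP _ (HK 1 ltac:(lra)) ys) as [y [_ Hy1]].
    { intros n. apply in_closure; auto. exists (v n). split; auto. apply cut_pos. lra.
      fold (fv n). rewrite Hys. lra. }
    exists y. apply E_intro. simpl; lra. intros e He N.
    destruct (Hy1 e He N) as [m [Hm Hm2]]. exists m. split; auto. exists (ys m, 1).
    split. split; simpl. lra. rewrite Hys. lra. unfold dbar; simpl. rewrite Rminus_diag, Rabs_R0. lra. }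
  destruct Hx1 as [x1 Hx1].
  assert (Hux1 : u x1 = 1). { pose proof (proj2 (Hu x1) 1 Hx1). pose proof (Hu3 x1). lra. }
  assert (Hcl : forall a, 0 < a -> closed_in X d (fun x => a <= u x)).
  { intros a Ha. apply closed_of. intros x Hx.
    assert (E (x, a)).
    { apply E_closed. simpl. split. lra. destruct (Hx 1 ltac:(lra)) as [y [Hy _]]. pose proof (Hu3 y). lra.
      intros e He. destruct (Hx e He) as [y [Hy Hxy]]. exists (y, a). split.
      apply (E_down y (u y)). apply Hu. lra. unfold dbar; simpl. rewrite Rminus_diag, Rabs_R0. lra. }
    apply Hu. auto. }
  assert (Fu : F_USCG X d u).
  { split. split. intros x; apply Hu3.
    - intros a Ha. unfold cut. destruct (Rlt_dec 0 a) as [h|h].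
      + split. exists x1. lra. apply Hcl; auto.
      + split. exists x1. apply in_closure; auto. lra. apply closure_closed; auto.
    - intros a Ha. apply (compact_ext _ (fun x => a <= u x)). intros x. split; apply cut_pos; lra.
      apply (closed_sub_compact _ HdP _ (closure_in X d (Ucut d U (a/2)))). apply Hcl; lra.
      2: apply HK; lra.
      intros x Hxa. assert (HE : E (x, a)). { apply (E_down x (u x)). apply Hu. lra. }
      intros e He. destruct HE as [_ HE]. destruct (HE (Rmin e (a/2))) as [N HN].
      apply Rmin_pos; lra.
      destruct (HN N (le_n N)) as [[y t] [[Ht1 Ht2] Hq]]. unfold dbar in Hq; simpl in *.
      pose proof (Rmin_l e (a/2)). pose proof (Rmin_r e (a/2)). pose proof (Rabs_pos (a - t)).
      pose proof (Rle_abs (a - t)). pose proof (metric_nonneg _ _ Hd x y).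
      exists y. split. exists (v N). split; auto. apply cut_pos. lra. fold (fv N). lra. lra. }
  exists (exist _ u Fu). intros e He.
  set (e0 := Rmin e 1).
  assert (He0 : 0 < e0 <= 1 /\ e0 <= e).
  { unfold e0. pose proof (Rmin_l e 1). pose proof (Rmin_r e 1). pose proof (Rmin_pos e 1 He Rlt_0_1). lra. }
  destruct (Hc (e0/8) ltac:(lra)) as [N HN]. exists N. intros n Hn.
  destruct (H_char X d Hd (exist _ u Fu) (v n)) as [_ [_ [_ H2]]].
  eapply Rle_lt_trans; [apply (H2 (e0/2))|lra]; simpl.
  - intros p Hp del Hdel. apply endoE in Hp. destruct Hp as [_ Hp].
    destruct (Hp (e0/4) ltac:(lra)) as [M HM]. destruct (HM (Nat.max M N) ltac:(lia)) as [q' [Hq' Hpq']].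
    destruct (H_char X d Hd (v (Nat.max M N)) (v n)) as [_ [A _]].
    destruct (A (e0/8) (HN (Nat.max M N) n ltac:(lia) Hn) q' Hq') as [q [Hq Hqq]].
    exists q. split; auto. pose proof (dbar_tri _ _ Hd p q' q). lra.
  - intros [x t] [Ht Hxt] del Hdel. simpl in Ht, Hxt.
    destruct (Rlt_dec t (e0/4)) as [h|h].
    + exists (x, 0). split. apply endoE, E0. rewrite dbar_same; auto. rewrite Rminus_0_r, Rabs_right; lra.
    + set (t' := t - e0/8).
      assert (Hz : forall m, exists z, closure_in X d (Ucut d U (e0/8)) z /\
                 ((N <= m)%nat -> t' <= fv m z /\ d x z < e0/8)).
      { intros m. destruct (Compare_dec.le_lt_dec N m) as [hm|hm].
        - destruct (H_char X d Hd (v n) (v m)) as [_ [A _]].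
          destruct (A (e0/8) (HN _ _ Hn hm) (x, t)) as [[z s] [[Hs1 Hs2] Hq]]. split; simpl; lra.
          unfold dbar in Hq; simpl in *. pose proof (Rabs_pos (t - s)). pose proof (Rle_abs (t - s)).
          pose proof (metric_nonneg _ _ Hd x z).
          exists z. split. apply in_closure; auto. exists (v m). split; auto. apply cut_pos. lra.
          fold (fv m). unfold t' in *. unfold fv in *. lra. intros _. unfold t', fv in *. split; lra.
        - exists x. split. apply in_closure; auto. exists (v n). split; auto. apply cut_pos. lra.
          unfold fv in *. lra. intros; lia. }
      destruct (choice_fun _ Hz) as [z Hzp].
      destruct (compact_seqc _ HdP _ (HK (e0/8) ltac:(lra)) z (fun m => proj1 (Hzp m))) as [y [_ Hy]].
      exists (y, t'). split.
      * apply endoE. apply E_intro. simpl. unfold t'. lra.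
        intros e' He' N'. destruct (Hy e' He' (Nat.max N N')) as [m [Hm Hm2]].
        exists m. split. lia. exists (z m, t'). split. split; simpl. unfold t'; lra.
        apply Rle_ge, (Hzp m). lia. unfold dbar; simpl. rewrite Rminus_diag, Rabs_R0. lra.
      * destruct (Hy (e0/8) ltac:(lra) N) as [m [Hm Hm2]].
        destruct (proj2 (Hzp m) Hm) as [_ Hxz].
        unfold dbar; simpl. pose proof (pm_tri _ _ HdP x (z m) y). rewrite (pm_sym _ _ HdP (z m) y) in H.
        unfold t'. rewrite Rabs_right by lra. lra.
Qed.

Lemma d_sep X (d : X -> X -> R) (Hd : is_metric X d) x y : (forall e, 0 < e -> d x y < e) -> x = y.
Proof.
  intros H. apply (metric_eq0 _ _ Hd). pose proof (metric_nonneg _ _ Hd x y).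
  destruct (Rle_lt_or_eq_dec _ _ H0) as [h|h]; auto. specialize (H _ h). lra.
Qed.

Lemma P3 X (d : X -> X -> R) (Hd : is_metric X d) (U : FUSCG X d -> Prop)
  (HK : forall a, 0 < a <= 1 -> rel_compact_in X d (Ucut d U a))
  (HU : closed_in (FUSCG X d) (H_end d) U) : compact_in (FUSCG X d) (H_end d) U.
Proof.
  apply seqc_compact. apply H_pmet; auto. intros w Hw.
  destruct (cauchy_sub X d Hd U HK w Hw) as [phi [Hphi Hc]].
  destruct (cauchy_lim X d Hd U HK (fun k => w (phi k)) (fun k => Hw _) Hc) as [u Hu].
  exists u. split.
  - apply (closed_closure (H_end d) U u HU). intros e He. destruct (Hu e He) as [N HN].
    exists (w (phi N)). split; auto.
  - intros e He N0. destruct (Hu e He) as [N HN]. exists (phi (Nat.max N N0)).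
    split. specialize (Hphi (Nat.max N N0)). lia. apply HN. lia.
Qed.

Lemma P1 X (d : X -> X -> R) (Hd : is_metric X d) (U : FUSCG X d -> Prop)
  (HU : compact_in (FUSCG X d) (H_end d) U) :
  forall a, 0 < a <= 1 -> compact_in X d (Ucut d U a).
Proof.
  pose proof (d_pmet X d Hd) as HdP. pose proof (H_pmet X d Hd) as HP.
  intros a Ha. apply seqc_compact; auto. intros s Hs.
  assert (Hw : forall n, exists w, U w /\ a <= proj1_sig w (s n)).
  { intros n. destruct (Hs n) as [w [Uw Hc]]. exists w. split; auto. apply cut_pos in Hc; lra. }
  destruct (choice_fun _ Hw) as [w Hwp].
  destruct (compact_seqc _ HP U HU w (fun n => proj1 (Hwp n))) as [ws [Uws Hws]].
  destruct (extract _ _ _ Hws) as [phi Hphi].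
  destruct (arch (a/2)) as [K0 HK0]. lra.
  destruct (fprop X d ws) as [Hf [[x1 Hx1] [_ Hcomp]]].
  assert (Hq : forall k, exists q : X * R, endo (proj1_sig ws) q /\ a/2 <= proj1_sig ws (fst q) /\
              ((K0 <= k)%nat -> dbar d (s (phi k), a) q < / INR (S k))).
  { intros k. destruct (Compare_dec.le_lt_dec K0 k) as [h|h].
    - destruct (H_char X d Hd ws (w (phi k))) as [_ [_ [B _]]].
      destruct (B (/ INR (S k)) (proj2 (Hphi k)) (s (phi k), a)) as [[y t] [[Ht1 Ht2] Hyt]].
      { split; simpl. lra. apply Rle_ge, Hwp. }
      pose proof (inv_le _ _ h). unfold dbar in Hyt. simpl in *.
      pose proof (Rabs_pos (a - t)). pose proof (Rle_abs (a - t)). pose proof (metric_nonneg _ _ Hd (s (phi k)) y).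
      exists (y, t). split. split; simpl; lra. split. simpl; lra. intros _. unfold dbar; simpl. lra.
    - exists (x1, 1). split. split; simpl. lra. lra. split. simpl. lra. intros; lia. }
  destruct (choice_fun _ Hq) as [q Hqp].
  destruct (compact_seqc _ HdP _ (Hcomp (a/2) ltac:(lra)) (fun k => fst (q k)) (fun k => proj1 (proj2 (Hqp k))))
    as [y [_ Hy]].
  exists y. split.
  - exists ws. split; auto. apply cut_pos. lra.
    assert (endo (proj1_sig ws) (y, a)).
    { apply endo_closed; auto. simpl; lra. intros e He.
      destruct (arch (e/2)) as [N HN]. lra.
      destruct (Hy (e/2) ltac:(lra) (Nat.max N K0)) as [k [Hk Hk2]].
      exists (q k). split. apply Hqp. pose proof (proj2 (proj2 (Hqp k)) ltac:(lia)).
      pose proof (inv_le _ _ (Nat.le_trans _ _ _ (Nat.le_max_l N K0) Hk)).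
      destruct (q k) as [z t]. unfold dbar in *. simpl in *.
      pose proof (metric_nonneg _ _ Hd (s (phi k)) z). lra. }
    destruct H. simpl in *. lra.
  - intros e He N0. destruct (arch (e/2)) as [N HN]. lra.
    destruct (Hy (e/2) ltac:(lra) (Nat.max (Nat.max N K0) N0)) as [k [Hk Hk2]].
    exists (phi k). split. pose proof (proj1 (Hphi k)). lia.
    pose proof (proj2 (proj2 (Hqp k)) ltac:(lia)).
    pose proof (inv_le N k ltac:(lia)).
    destruct (q k) as [z t]. unfold dbar in *. cbn [fst snd] in *.
    pose proof (Rabs_pos (a - t)).
    pose proof (pm_tri _ _ HdP y z (s (phi k))) as T1. rewrite (pm_sym _ _ HdP z) in T1. lra.
Qed.

Lemma P2 X (d : X -> X -> R) (Hd : is_metric X d) (A : X -> Prop) :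
  compact_in X d A -> rel_compact_in X d A.
Proof.
  pose proof (d_pmet X d Hd) as HdP. intros HA. unfold rel_compact_in.
  apply (closed_sub_compact _ HdP _ A); auto. apply closure_closed; auto.
  intros x Hx. apply (closed_closure d A x); auto. apply compact_closed; auto.
  apply d_sep; auto.
Qed.

Theorem theorem5p10 (X : Type) (d : X -> X -> R) (Hd : @is_metric X d)
  (U : @FUSCG X d -> Prop) :
  (@compact_in (@FUSCG X d) (@H_end X d) U <->
     ((forall a, 0 < a <= 1 -> @rel_compact_in X d (@Ucut X d U a)) /\
      @closed_in (@FUSCG X d) (@H_end X d) U)) /\
  (((forall a, 0 < a <= 1 -> @rel_compact_in X d (@Ucut X d U a)) /\
      @closed_in (@FUSCG X d) (@H_end X d) U) <->
   ((forall a, 0 < a <= 1 -> @compact_in X d (@Ucut X d U a)) /\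
      @closed_in (@FUSCG X d) (@H_end X d) U)).
Proof.
  assert (Cl : compact_in (FUSCG X d) (H_end d) U -> closed_in (FUSCG X d) (H_end d) U).
  { apply compact_closed. apply H_pmet; auto. intros u v H. apply H_sep; auto. }
  split; split.
  - intros HU. split; auto. intros a Ha. apply P2; auto. apply P1; auto.
  - intros [HK HU]. apply P3; auto.
  - intros [HK HU]. split; auto. apply P1; auto. apply P3; auto.
  - intros [HK HU]. split; auto. intros a Ha. apply P2; auto.
Qed.
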